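(* There exist absolute constants $0<c\le C<\infty$ such that for all $d\in\mathbb N_+$ and all $1\le n\le 3^d$, $$c\,\psi(n)\le a_n(I_d: W_2^{\infty}(\mathbb T^d)\to L_2(\mathbb T^d))\le C\,\psi(n),\qquad \psi(n)=\begin{cases}1,&1\le n\le d,\\ \Big(\frac{\log(1+\frac{d}{\log n})}{\log n}\Big)^{1/2},& d\le n\le 3^d,\end{cases}$$ and $a_n(I_d: W_2^{\infty}(\mathbb T^d)\to L_2(\mathbb T^d))=0$ for $n>3^d$.
   Context: $\log$ is base 2. $\mathbb T^d$ carries the normalized Lebesgue measure and $\hat f({\bf k})$ are Fourier coefficients w.r.t. $e^{i{\bf k}\cdot{\bf x}}$. $W_2^\infty(\mathbb T^d)$ is the space of all $f\in\bigcap_{{\bf m}\in\mathbb N_+^d}W_2^{\bf m}(\mathbb T^d)$ with $\sup_{{\bf m}\in\mathbb N_+^d}\|f|W_2^{\bf m}(\mathbb T^d)\|<\infty$, normed by this supremum, where $\|f|W_2^{\bf m}(\mathbb T^d)\|=\big(\sum_{{\bf k}\in\mathbb Z^d}(1+\sum_j|k_j|^{2m_j})|\hat f({\bf k})|^2\big)^{1/2}$. Equivalently, $W_2^\infty(\mathbb T^d)$ consists of trigonometric polynomials $f=\sum_{{\bf k}\in\{-1,0,1\}^d}\hat f({\bf k})e^{i{\bf k}\cdot{\bf x}}$ with norm $\big(\sum_{{\bf k}\in\{-1,0,1\}^d}(1+\sum_{j=1}^d|k_j|)|\hat f({\bf k})|^2\big)^{1/2}$; it has dimension $3^d$. $I_d$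 is the identity embedding; $a_n(T)=\inf\{\|T-A\|:\operatorname{rank}A<n\}$. *)

(* Defs.v *)
From Stdlib Require Import Reals List ZArith ClassicalEpsilon.
Import ListNotations.
Open Scope R_scope.

Definition Cx : Type := (R * R)%type.
Definition C0 : Cx := (0, 0).
Definition Cadd (z w : Cx) : Cx := (fst z + fst w, snd z + snd w).
Definition Csub (z w : Cx) : Cx := (fst z - fst w, snd z - snd w).
Definition Cmul (z w : Cx) : Cx :=
  (fst z * fst w - snd z * snd w, fst z * snd w + snd z * fst w).
Definition Cnorm2 (z : Cx) : R := fst z ^ 2 + snd z ^ 2.

Fixpoint Csum (n : nat) (f : nat -> Cx) : Cx :=
  match n with O => C0 | S m => Cadd (Csum m f) (f m) end.
Fixpoint Rsum (n : nat) (f : nat -> R) : R :=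
  match n with O => 0 | S m => Rsum m f + f m end.

Definition is_lower_bound (E : R -> Prop) (m : R) : Prop := forall x, E x -> m <= x.
Definition is_glb (E : R -> Prop) (m : R) : Prop :=
  is_lower_bound E m /\ (forall b, is_lower_bound E b -> b <= m).

Definition Rsup (E : R -> Prop) : R :=
  match excluded_middle_informative (exists m, is_lub E m) with
  | left H => proj1_sig (constructive_indefinite_description _ H)
  | right _ => 0
  end.
Definition Rinf (E : R -> Prop) : R :=
  match excluded_middle_informative (exists m, is_glb E m) with
  | left H => proj1_sig (constructive_indefinite_description _ H)
  | right _ => 0
  end.

Fixpoint cube (d : nat) : list (list Z) :=
  match d with
  | O => [[]]
  | S m => flat_map (fun k => map (fun e => e :: k) [(-1)%Z; 0%Z; 1%Z]) (cube m)
  end.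
Definition dimW (d : nat) : nat := (3 ^ d)%nat.
Definition freq (d j : nat) : list Z := nth j (cube d) [].
(* weight 1 + sum_j |k_j|  (for k in {-1,0,1}^d, |k_j|^{2m_j} = |k_j|) *)
Definition weight (k : list Z) : R := 1 + IZR (fold_right Z.add 0%Z (map Z.abs k)).

(* An element f of W_2^infty(T^d) is given by its Fourier coefficients
   f j = \hat f (freq d j), j < 3^d. *)
Definition W_norm (d : nat) (f : nat -> Cx) : R :=
  sqrt (Rsum (dimW d) (fun j => weight (freq d j) * Cnorm2 (f j))).
(* L_2(T^d)-norm (normalized measure, Parseval) of a trig. polynomial
   with spectrum in {-1,0,1}^d *)
Definition L2_norm (d : nat) (g : nat -> Cx) : R :=
  sqrt (Rsum (dimW d) (fun j => Cnorm2 (g j))).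

(* Linear operators on the (3^d-dimensional) space of trigonometric
   polynomials with spectrum in {-1,0,1}^d, as complex matrices in the
   Fourier basis. *)
Definition mat : Type := nat -> nat -> Cx.
Definition apply (d : nat) (A : mat) (f : nat -> Cx) : nat -> Cx :=
  fun i => Csum (dimW d) (fun j => Cmul (A i j) (f j)).

(* rank A < n  (n >= 1): A factors through C^(n-1) *)
Definition rank_lt (d : nat) (A : mat) (n : nat) : Prop :=
  (1 <= n)%nat /\
  exists B D : mat, forall i j, (i < dimW d)%nat -> (j < dimW d)%nat ->
    A i j = Csum (n - 1) (fun l => Cmul (B i l) (D l j)).

Definition opnorm_I_minus (d : nat) (A : mat) : R :=
  Rsup (fun y => exists f : nat -> Cx, W_norm d f <= 1 /\
          y = L2_norm d (fun i => Csub (f i) (apply d A f i))).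

Definition approx_number (d n : nat) : R :=
  Rinf (fun y => exists A : mat, rank_lt d A n /\ y = opnorm_I_minus d A).

Definition log2 (x : R) : R := ln x / ln 2.

Definition psi (d n : nat) : R :=
  if (n <=? d)%nat then 1
  else sqrt (log2 (1 + INR d / log2 (INR n)) / log2 (INR n)).

(* Main.v *)
Require Import Defs.
From Stdlib Require Import Reals.
From Stdlib Require Import Lra Lia List ZArith Classical ClassicalEpsilon.
From Coquelicot Require Import Coquelicot.
Import ListNotations.
Open Scope R_scope.
Ltac Cring := try change Cmul with Cmult; try change Cadd with Cplus; try change C0 with (RtoC 0); try change Csub with Cminus; match goal with |- ?a = ?b => change (@eq C a b); ring end.

Lemma Cx_eta : forall z : Cx, z = (fst z, snd z).
Proof. intros [a b]; reflexivity. Qed.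

Definition Lsum (l : list nat) (f : nat -> C) : C :=
  fold_right (fun j acc => Cplus (f j) acc) (RtoC 0) l.

Lemma Lsum_app : forall l1 l2 f, Lsum (l1 ++ l2) f = Cplus (Lsum l1 f) (Lsum l2 f).
Proof. induction l1; intros; simpl. ring. rewrite IHl1. ring. Qed.

Lemma Csum_Lsum : forall n f, Csum n f = Lsum (seq 0 n) f.
Proof.
  induction n; intros. reflexivity.
  rewrite seq_S, Lsum_app. simpl. rewrite IHn. change (Cadd (Lsum (seq 0 n) f) (f n) = Cplus (Lsum (seq 0 n) f) (Cplus (f n) (RtoC 0))). 
  unfold Cadd. change (Cplus (Lsum (seq 0 n) f) (f n) = Cplus (Lsum (seq 0 n) f) (Cplus (f n) (RtoC 0))). ring.
Qed.

Lemma Lsum_ext : forall l f g, (forall j, In j l -> f j = g j) -> Lsum l f = Lsum l g.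
Proof. induction l; intros; simpl. reflexivity. rewrite H by (left; auto). rewrite (IHl f g); auto. intros; apply H; right; auto. Qed.

Lemma Lsum_zero : forall l f, (forall j, In j l -> f j = RtoC 0) -> Lsum l f = RtoC 0.
Proof. intros. rewrite (Lsum_ext l f (fun _ => RtoC 0)) by auto. clear. induction l; simpl. reflexivity. rewrite IHl. ring. Qed.

Lemma Lsum_lin : forall l f g c, Lsum l (fun j => Cminus (f j) (Cmult c (g j))) = Cminus (Lsum l f) (Cmult c (Lsum l g)).
Proof. induction l; intros; simpl. ring. rewrite IHl. ring. Qed.

Lemma Lsum_scal : forall l f c, Lsum l (fun j => Cmult c (f j)) = Cmult c (Lsum l f).
Proof. induction l; intros; simpl. ring. rewrite IHl. ring. Qed.

Lemma Lsum_filter : forall (P : nat -> bool) l f, (forall j, In j l -> P j = false -> f j = RtoC 0) ->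
  Lsum l f = Lsum (filter P l) f.
Proof. induction l; intros; simpl. reflexivity. destruct (P a) eqn:E; simpl.
  rewrite IHl; auto. intros; apply H; auto; right; auto.
  rewrite H by (auto; left; auto). rewrite IHl. ring. intros; apply H; auto; right; auto. Qed.

Lemma C1_neq_0 : RtoC 1 <> RtoC 0.
Proof. intro H. injection H. lra. Qed.

Lemma kernel : forall (S : list nat), NoDup S -> forall (m : nat) (D : nat -> nat -> C),
  (m < length S)%nat -> exists f : nat -> C,
   (forall j, ~ In j S -> f j = RtoC 0) /\ (exists j, In j S /\ f j <> RtoC 0) /\
   (forall l, (l < m)%nat -> Lsum S (fun j => Cmult (D l j) (f j)) = RtoC 0).
Proof.
  induction S as [|a S' IH]; intros HN m D Hm. simpl in Hm; lia.
  inversion HN as [|a0 S0 Ha HS']; subst.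
  destruct (classic (exists l, (l < m)%nat /\ D l a <> RtoC 0)) as [[l0 [Hl0 Hp]]|Hno].
  - destruct m as [|m']. lia.
    set (p := D l0 a).
    set (sg := fun l => if (l <? l0)%nat then l else S l).
    set (D' := fun l j => Cminus (D (sg l) j) (Cmult (Cdiv (D (sg l) a) p) (D l0 j))).
    destruct (IH HS' m' D') as [f' [Hsup [Hnz Heq]]]. simpl in Hm; lia.
    set (T := fun l => Lsum S' (fun j => Cmult (D l j) (f' j))).
    exists (fun j => if (j =? a)%nat then Cdiv (Copp (T l0)) p else f' j).
    split; [|split].
    + intros j Hj. destruct (j =? a)%nat eqn:E. apply Nat.eqb_eq in E; subst; exfalso; apply Hj; left; auto.
      apply Hsup. intro; apply Hj; right; auto.
    + destruct Hnz as [j [Hj Hf]]. exists j. split. right; auto.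
      destruct (j =? a)%nat eqn:E. apply Nat.eqb_eq in E; subst; contradiction. auto.
    + intros l Hl. simpl. rewrite Nat.eqb_refl.
      rewrite (Lsum_ext S' _ (fun j => Cmult (D l j) (f' j))).
      2:{ intros j Hj. destruct (j =? a)%nat eqn:E. apply Nat.eqb_eq in E; subst; contradiction. auto. }
      fold (T l).
      destruct (Nat.eq_dec l l0) as [->|Hne].
      * fold p. field. exact Hp.
      * set (l' := if (l <? l0)%nat then l else pred l).
        assert (Hsl : sg l' = l). { unfold sg, l'. destruct (l <? l0)%nat eqn:E. rewrite E; auto.
          apply Nat.ltb_ge in E. destruct (pred l <? l0)%nat eqn:E2. apply Nat.ltb_lt in E2. lia. lia. }
        assert (Hl' : (l' < m')%nat). { unfold l'. destruct (l <? l0)%nat eqn:E. apply Nat.ltb_lt in E. lia. lia. }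
        specialize (Heq l' Hl'). unfold D' in Heq. rewrite Hsl in Heq.
        rewrite (Lsum_ext S' _ (fun j => Cminus (Cmult (D l j) (f' j)) (Cmult (Cdiv (D l a) p) (Cmult (D l0 j) (f' j))))) in Heq by (intros; ring).
        rewrite Lsum_lin in Heq. fold (T l) (T l0) in Heq.
        assert (HT : T l = Cmult (Cdiv (D l a) p) (T l0)).
        { apply (f_equal (fun z => Cplus z (Cmult (Cdiv (D l a) p) (T l0)))) in Heq. 
          replace (Cplus (Cminus (T l) (Cmult (Cdiv (D l a) p) (T l0))) (Cmult (Cdiv (D l a) p) (T l0))) with (T l) in Heq by ring.
          rewrite Heq. ring. }
        rewrite HT. field. exact Hp.
  - exists (fun j => if (j =? a)%nat then RtoC 1 else RtoC 0). split; [|split].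
    + intros j Hj. destruct (j =? a)%nat eqn:E; auto. apply Nat.eqb_eq in E; subst; exfalso; apply Hj; left; auto.
    + exists a. split. left; auto. rewrite Nat.eqb_refl. apply C1_neq_0.
    + intros l Hl. simpl. rewrite Nat.eqb_refl. rewrite Lsum_zero.
      assert (D l a = RtoC 0). { apply NNPP; intro H; apply Hno; exists l; auto. }
      rewrite H. ring.
      intros j Hj. destruct (j =? a)%nat eqn:E. apply Nat.eqb_eq in E; subst; contradiction. ring.
Qed.

Lemma Csum_S : forall n f, Csum (S n) f = Cplus (Csum n f) (f n). Proof. reflexivity. Qed.
Lemma Csum_O : forall f, Csum 0 f = RtoC 0. Proof. reflexivity. Qed.

Lemma Csum_ext : forall n f g, (forall i, (i < n)%nat -> f i = g i) -> Csum n f = Csum n g.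
Proof. induction n; intros; auto. rewrite !Csum_S, H by lia. rewrite (IHn f g); auto. Qed.

Lemma Csum_add : forall n f g, Csum n (fun i => Cplus (f i) (g i)) = Cplus (Csum n f) (Csum n g).
Proof. induction n; intros. rewrite !Csum_O; Cring. rewrite !Csum_S, IHn. Cring. Qed.

Lemma Csum_mulr : forall n f c, Cmult (Csum n f) c = Csum n (fun i => Cmult (f i) c).
Proof. induction n; intros. rewrite !Csum_O; Cring. rewrite !Csum_S, <- IHn. Cring. Qed.

Lemma Csum_mull : forall n f c, Cmult c (Csum n f) = Csum n (fun i => Cmult c (f i)).
Proof. induction n; intros. rewrite !Csum_O; Cring. rewrite !Csum_S, <- IHn. Cring. Qed.

Lemma Csum_zero : forall n f, (forall i, (i < n)%nat -> f i = RtoC 0) -> Csum n f = RtoC 0.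
Proof. induction n; intros; auto. rewrite Csum_S, H, IHn by (auto; lia). Cring. Qed.

Lemma Csum_swap : forall n m (g : nat -> nat -> C),
  Csum n (fun j => Csum m (fun l => g j l)) = Csum m (fun l => Csum n (fun j => g j l)).
Proof. induction n; intros. rewrite Csum_O, Csum_zero; auto.
  rewrite Csum_S, IHn, <- Csum_add. apply Csum_ext; intros; rewrite Csum_S; auto. Qed.

Lemma Csum_single : forall n f i, (i < n)%nat -> (forall j, (j < n)%nat -> j <> i -> f j = RtoC 0) -> Csum n f = f i.
Proof. induction n; intros. lia. rewrite Csum_S. destruct (Nat.eq_dec i n).
  subst. rewrite Csum_zero. Cring. intros; apply H0; lia.
  rewrite (IHn f i), (H0 n); try lia. Cring. intros; apply H0; lia. Qed.

Lemma Csum_shift : forall n f, Csum (S n) f = Cplus (f 0%nat) (Csum n (fun l => f (S l))).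
Proof. induction n; intros. rewrite Csum_S, !Csum_O; Cring. rewrite Csum_S, IHn, Csum_S. Cring. Qed.

Lemma Csum_count : forall (G : list nat) dflt i (v : C), NoDup G -> dflt <> i ->
  forall m, (length G <= m)%nat ->
  Csum m (fun l => if (nth l G dflt =? i)%nat then v else RtoC 0) = if existsb (Nat.eqb i) G then v else RtoC 0.
Proof.
  induction G as [|a G IH]; intros dflt i v HN Hd m Hm.
  - simpl. apply Csum_zero. intros l Hl. destruct l; simpl; destruct (dflt =? i)%nat eqn:E; auto; apply Nat.eqb_eq in E; contradiction.
  - destruct m as [|m]. simpl in Hm; lia. inversion HN; subst.
    rewrite Csum_shift. simpl. rewrite (IH dflt i v) by (auto; simpl in Hm; lia).
    destruct (a =? i)%nat eqn:E.
    + apply Nat.eqb_eq in E; subst. rewrite Nat.eqb_refl. simpl.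
      destruct (existsb (Nat.eqb i) G) eqn:E2. apply existsb_exists in E2. destruct E2 as [x [Hx Hx2]].
      apply Nat.eqb_eq in Hx2; subst; contradiction. Cring.
    + rewrite Nat.eqb_sym, E. simpl. Cring.
Qed.

Lemma Rsum_ext : forall n f g, (forall i, (i < n)%nat -> f i = g i) -> Rsum n f = Rsum n g.
Proof. induction n; intros; simpl; auto. rewrite H by lia. rewrite (IHn f g); auto. Qed.
Lemma Rsum_le : forall n f g, (forall i, (i < n)%nat -> f i <= g i) -> Rsum n f <= Rsum n g.
Proof. induction n; intros; simpl. lra. pose proof (H n). pose proof (IHn f g). 
  assert (Rsum n f <= Rsum n g) by (apply IHn; auto). assert (f n <= g n) by (apply H; lia). lra. Qed.
Lemma Rsum_nonneg : forall n f, (forall i, (i < n)%nat -> 0 <= f i) -> 0 <= Rsum n f.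
Proof. induction n; intros; simpl. lra. assert (0 <= Rsum n f) by (apply IHn; auto). assert (0 <= f n) by (apply H; lia). lra. Qed.
Lemma Rsum_term : forall n f i, (forall i, (i < n)%nat -> 0 <= f i) -> (i < n)%nat -> f i <= Rsum n f.
Proof. induction n; intros; simpl. lia. destruct (Nat.eq_dec i n). subst. 
  assert (0 <= Rsum n f) by (apply Rsum_nonneg; auto). lra.
  assert (f i <= Rsum n f) by (apply IHn; auto; lia). assert (0 <= f n) by (apply H; lia). lra. Qed.
Lemma Rsum_scal : forall n f c, Rsum n (fun i => c * f i) = c * Rsum n f.
Proof. induction n; intros; simpl. ring. rewrite IHn. ring. Qed.
Lemma Rsum_zero : forall n, Rsum n (fun _ => 0) = 0.
Proof. induction n; simpl; auto. rewrite IHn; ring. Qed.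

Lemma Rsup_spec : forall E, (exists m, is_lub E m) -> is_lub E (Rsup E).
Proof. intros. unfold Rsup. destruct excluded_middle_informative as [H1|H1].
  apply (proj2_sig (constructive_indefinite_description _ H1)). contradiction. Qed.
Lemma Rinf_spec : forall E, (exists m, is_glb E m) -> is_glb E (Rinf E).
Proof. intros. unfold Rinf. destruct excluded_middle_informative as [H1|H1].
  apply (proj2_sig (constructive_indefinite_description _ H1)). contradiction. Qed.

Lemma lub_exists : forall E : R -> Prop, (exists x, E x) -> (exists b, forall x, E x -> x <= b) -> exists m, is_lub E m.
Proof. intros E [x Hx] [b Hb]. destruct (completeness E) as [m Hm]. exists b; intros y Hy; apply Hb; auto. exists x; auto. exists m; auto. Qed.

Lemma glb_exists : forall E : R -> Prop, (exists x, E x) -> (exists b, forall x, E x -> b <= x) -> exists m, is_glb E m.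
Proof. intros E [x Hx] [b Hb].
  destruct (completeness (fun y => E (- y))) as [m [Hm1 Hm2]].
  exists (-b). intros y Hy. specialize (Hb _ Hy). lra.
  exists (-x). rewrite Ropp_involutive; auto.
  exists (-m). split.
  - intros y Hy. assert (-y <= m). apply Hm1. rewrite Ropp_involutive; auto. lra.
  - intros c Hc. assert (m <= -c). apply Hm2. intros y Hy. specialize (Hc _ Hy). lra. lra.
Qed.

Lemma Rsup_le : forall E b, (exists x, E x) -> (forall x, E x -> x <= b) -> Rsup E <= b.
Proof. intros. destruct (Rsup_spec E) as [_ H1]. apply lub_exists; eauto. apply H1. intros y Hy; auto. Qed.
Lemma Rsup_ge : forall E x, (exists b, forall x, E x -> x <= b) -> E x -> x <= Rsup E.
Proof. intros. destruct (Rsup_spec E) as [H1 _]. apply lub_exists; eauto. apply H1; auto. Qed.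
Lemma Rinf_ge : forall E b, (exists x, E x) -> (forall x, E x -> b <= x) -> b <= Rinf E.
Proof. intros. destruct (Rinf_spec E) as [_ H1]. apply glb_exists; eauto. apply H1. intros y Hy; auto. Qed.
Lemma Rinf_le : forall E x, (exists b, forall x, E x -> b <= x) -> E x -> Rinf E <= x.
Proof. intros. destruct (Rinf_spec E) as [H1 _]. apply glb_exists; eauto. apply H1; auto. Qed.

Definition abs_sum (k : list Z) : Z := fold_right Z.add 0%Z (map Z.abs k).
Lemma weight_abs : forall k, weight k = 1 + IZR (abs_sum k). Proof. reflexivity. Qed.
Lemma abs_sum_nonneg : forall k, (0 <= abs_sum k)%Z.
Proof. unfold abs_sum. induction k; simpl. lia. pose proof (Z.abs_nonneg a). lia. Qed.
Lemma weight_ge1 : forall k, 1 <= weight k.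
Proof. intros. rewrite weight_abs. pose proof (IZR_le _ _ (abs_sum_nonneg k)). lra. Qed.

Lemma Cnorm2_nonneg : forall z, 0 <= Cnorm2 z.
Proof. intros [a b]; unfold Cnorm2; simpl; nra. Qed.
Lemma Cnorm2_Cmod : forall z, Cnorm2 z = Cmod z ^ 2.
Proof. intros [a b]. unfold Cmod, Cnorm2. cbn [fst snd]. rewrite pow2_sqrt. reflexivity. nra. Qed.
Lemma Cnorm2_pos : forall z : C, z <> RtoC 0 -> 0 < Cnorm2 z.
Proof. intros [a b] H. unfold Cnorm2; simpl.
  destruct (Req_dec a 0); destruct (Req_dec b 0); subst; try nra. exfalso; apply H; reflexivity. Qed.
Lemma Cnorm2_scal : forall r z, Cnorm2 (Cmult (RtoC r) z) = r ^ 2 * Cnorm2 z.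
Proof. intros r [a b]; unfold Cnorm2; simpl; ring. Qed.
Lemma Cnorm2_sub0 : forall z, Cnorm2 (Csub z (RtoC 0)) = Cnorm2 z.
Proof. intros [a b]; unfold Cnorm2; simpl; ring. Qed.
Lemma Cnorm2_subself : forall z, Cnorm2 (Csub z z) = 0.
Proof. intros [a b]; unfold Cnorm2; simpl; ring. Qed.

Lemma Cmod_Csum : forall n f, Cmod (Csum n f) <= Rsum n (fun i => Cmod (f i)).
Proof. induction n; intros; simpl. change (Cmod (RtoC 0) <= 0). rewrite Cmod_0. lra.
  change (Cmod (Cplus (Csum n f) (f n)) <= Rsum n (fun i => Cmod (f i)) + Cmod (f n)).
  pose proof (Cmod_triangle (Csum n f) (f n)). pose proof (IHn f). lra. Qed.

Lemma sqrt_le1 : forall x, 0 <= x -> sqrt x <= 1 -> x <= 1.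
Proof. intros. pose proof (sqrt_sqrt x H). pose proof (sqrt_pos x). nra. Qed.

Lemma Wsum_le1 : forall d f, W_norm d f <= 1 ->
  Rsum (dimW d) (fun j => weight (freq d j) * Cnorm2 (f j)) <= 1.
Proof. intros. apply sqrt_le1; auto. apply Rsum_nonneg; intros.
  pose proof (weight_ge1 (freq d i)); pose proof (Cnorm2_nonneg (f i)); nra. Qed.

Lemma coef_le1 : forall d f j, W_norm d f <= 1 -> (j < dimW d)%nat -> Cmod (f j) <= 1.
Proof. intros. pose proof (Wsum_le1 d f H).
  assert (weight (freq d j) * Cnorm2 (f j) <= 1).
  { eapply Rle_trans; [|exact H1]. apply (Rsum_term _ (fun j => weight (freq d j) * Cnorm2 (f j))); auto.
    intros; pose proof (weight_ge1 (freq d i)); pose proof (Cnorm2_nonneg (f i)); nra. }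
  pose proof (weight_ge1 (freq d j)); pose proof (Cnorm2_nonneg (f j)).
  rewrite Cnorm2_Cmod in *. pose proof (Cmod_ge_0 (f j)). nra. Qed.

Definition opset (d : nat) (A : mat) : R -> Prop := fun y => exists f : nat -> Cx, W_norm d f <= 1 /\
          y = L2_norm d (fun i => Csub (f i) (Defs.apply d A f i)).

Lemma opset_bounded : forall d A, exists b, forall y, opset d A y -> y <= b.
Proof.
  intros d A. exists (sqrt (Rsum (dimW d) (fun i => (1 + Rsum (dimW d) (fun j => Cmod (A i j))) ^ 2))).
  intros y [f [Hf ->]]. unfold L2_norm. apply sqrt_le_1_alt. apply Rsum_le. intros i Hi.
  rewrite Cnorm2_Cmod. apply pow_incr. split. apply Cmod_ge_0.
  change (Cmod (Cminus (f i) (Defs.apply d A f i)) <= 1 + Rsum (dimW d) (fun j => Cmod (A i j))).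
  unfold Cminus. eapply Rle_trans. apply Cmod_triangle. rewrite Cmod_opp.
  pose proof (coef_le1 d f i Hf Hi).
  assert (Cmod (Defs.apply d A f i) <= Rsum (dimW d) (fun j => Cmod (A i j))).
  { unfold Defs.apply. eapply Rle_trans. apply Cmod_Csum. apply Rsum_le. intros j Hj.
    change (Cmod (Cmult (A i j) (f j)) <= Cmod (A i j)). rewrite Cmod_mult.
    pose proof (coef_le1 d f j Hf Hj). pose proof (Cmod_ge_0 (A i j)). pose proof (Cmod_ge_0 (f j)). nra. }
  lra.
Qed.

Lemma W_norm_zero : forall d, W_norm d (fun _ => C0) <= 1.
Proof. intros. unfold W_norm. rewrite (Rsum_ext _ _ (fun _ => 0)). rewrite Rsum_zero, sqrt_0. lra.
  intros. unfold Cnorm2, C0; simpl; ring. Qed.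

Lemma opset_nonempty : forall d A, exists y, opset d A y.
Proof. intros. eexists. exists (fun _ => C0). split. apply W_norm_zero. reflexivity. Qed.

Lemma opnorm_nonneg : forall d A, 0 <= opnorm_I_minus d A.
Proof. intros. destruct (opset_nonempty d A) as [y Hy].
  assert (0 <= y). { destruct Hy as [f [_ ->]]. apply sqrt_pos. }
  assert (y <= opnorm_I_minus d A). { apply Rsup_ge. apply opset_bounded. exact Hy. }
  lra. Qed.

Definition aset (d n : nat) : R -> Prop := fun y => exists A : mat, rank_lt d A n /\ y = opnorm_I_minus d A.

Lemma aset_lb : forall d n, exists b, forall y, aset d n y -> b <= y.
Proof. intros. exists 0. intros y [A [_ ->]]. apply opnorm_nonneg. Qed.

Lemma aset_nonempty : forall d n, (1 <= n)%nat -> exists y, aset d n y.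
Proof. intros. exists (opnorm_I_minus d (fun _ _ => C0)). exists (fun _ _ => C0). split; auto.
  split; auto. exists (fun _ _ => C0), (fun _ _ => C0). intros. symmetry. apply Csum_zero. intros. Cring. Qed.

Lemma In_filter_seq : forall (good : nat -> bool) N i, In i (filter good (seq 0 N)) <-> (i < N)%nat /\ good i = true.
Proof. intros. rewrite filter_In, in_seq. split; intros [H1 H2]; split; auto; lia. Qed.

Lemma upper_gen : forall d n (good : nat -> bool) c, (1 <= n)%nat ->
  (length (filter good (seq 0 (dimW d))) <= n - 1)%nat -> 0 <= c ->
  (forall j, (j < dimW d)%nat -> good j = false -> 1 <= c * weight (freq d j)) ->
  approx_number d n <= sqrt c.
Proof.
  intros d n good c Hn Hlen Hc Hbad.
  set (N := dimW d) in *. set (G := filter good (seq 0 N)) in *.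
  set (P := fun i l => if (nth l G N =? i)%nat then RtoC 1 else RtoC 0).
  set (A := fun i j => Csum (n - 1) (fun l => Cmul (P i l) (P j l))).
  assert (HND : NoDup G) by (apply NoDup_filter, seq_NoDup).
  assert (HA : forall i j, (i < N)%nat -> (j < N)%nat -> A i j = if andb (i =? j)%nat (good i) then RtoC 1 else RtoC 0).
  { intros i j Hi Hj. unfold A. destruct (i =? j)%nat eqn:Eij.
    - apply Nat.eqb_eq in Eij; subst j. simpl.
      rewrite (Csum_ext _ _ (fun l => if (nth l G N =? i)%nat then RtoC 1 else RtoC 0)).
      2:{ intros l _. unfold P. destruct (nth l G N =? i)%nat; Cring. }
      rewrite Csum_count; auto; try lia.
      destruct (existsb (Nat.eqb i) G) eqn:E; destruct (good i) eqn:Eg; auto.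
      + apply existsb_exists in E. destruct E as [x [Hx Hx2]]. apply Nat.eqb_eq in Hx2; subst x.
        apply In_filter_seq in Hx. destruct Hx. congruence.
      + assert (In i G) by (apply In_filter_seq; auto).
        assert (existsb (Nat.eqb i) G = true). { apply existsb_exists. exists i. split; auto. apply Nat.eqb_refl. }
        congruence.
    - simpl. apply Csum_zero. intros l _. unfold P.
      destruct (nth l G N =? i)%nat eqn:E1; destruct (nth l G N =? j)%nat eqn:E2; try Cring.
      apply Nat.eqb_eq in E1; apply Nat.eqb_eq in E2. apply Nat.eqb_neq in Eij. lia. }
  assert (Hmem : aset d n (opnorm_I_minus d A)).
  { exists A. split; auto. split; auto. exists P, (fun l j => P j l). intros; reflexivity. }
  eapply Rle_trans. apply (Rinf_le (aset d n)). apply aset_lb. exact Hmem.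
  apply Rsup_le. apply opset_nonempty.
  intros y [f [Hf ->]]. unfold L2_norm. apply sqrt_le_1_alt.
  pose proof (Wsum_le1 d f Hf).
  apply Rle_trans with (c * Rsum (dimW d) (fun j => weight (freq d j) * Cnorm2 (f j))); [|nra].
  rewrite <- Rsum_scal. apply Rsum_le. intros i Hi.
  assert (Hap : Defs.apply d A f i = if good i then f i else RtoC 0).
  { unfold Defs.apply. rewrite (Csum_single _ _ i); auto.
    - rewrite HA by auto. rewrite Nat.eqb_refl. simpl. destruct (good i); Cring.
    - intros j Hj Hji. rewrite HA by auto. apply Nat.eqb_neq in Hji. rewrite Nat.eqb_sym, Hji. simpl. Cring. }
  rewrite Hap. pose proof (weight_ge1 (freq d i)). pose proof (Cnorm2_nonneg (f i)).
  destruct (good i) eqn:Eg.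
  - rewrite Cnorm2_subself. apply Rmult_le_pos; [lra| nra].
  - rewrite Cnorm2_sub0. specialize (Hbad i Hi Eg). nra.
Qed.

Lemma lower_gen : forall d n (good : nat -> bool) t, (1 <= n)%nat ->
  (n <= length (filter good (seq 0 (dimW d))))%nat -> 0 < t ->
  (forall j, (j < dimW d)%nat -> good j = true -> weight (freq d j) <= t) ->
  sqrt (/ t) <= approx_number d n.
Proof.
  intros d n good t Hn Hlen Ht Hgood.
  set (N := dimW d) in *. set (S := filter good (seq 0 N)) in *.
  assert (HND : NoDup S) by (apply NoDup_filter, seq_NoDup).
  apply (Rinf_ge (aset d n)). apply aset_nonempty; auto.
  intros y [A [[_ [B [D HBD]]] ->]].
  destruct (kernel S HND (n - 1) D) as [f [Hsup [[j0 [Hj0 Hf0]] Hker]]]. lia.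
  set (Q := Rsum N (fun j => weight (freq d j) * Cnorm2 (f j))).
  assert (Hterm : forall j, (j < N)%nat -> 0 <= weight (freq d j) * Cnorm2 (f j)).
  { intros. pose proof (weight_ge1 (freq d j)); pose proof (Cnorm2_nonneg (f j)); nra. }
  assert (HQ : 0 < Q).
  { apply In_filter_seq in Hj0 as Hj0'. destruct Hj0' as [Hj0N _].
    eapply Rlt_le_trans; [|apply (Rsum_term N (fun j => weight (freq d j) * Cnorm2 (f j)) j0 Hterm Hj0N)].
    pose proof (weight_ge1 (freq d j0)); pose proof (Cnorm2_pos (f j0) Hf0). nra. }
  set (r := / sqrt Q).
  assert (Hr2 : r ^ 2 * Q = 1).
  { unfold r. pose proof (sqrt_lt_R0 Q HQ). pose proof (sqrt_sqrt Q (Rlt_le _ _ HQ)).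
    set (s := sqrt Q) in *. rewrite <- H0. field. lra. }
  set (g := fun j => Cmult (RtoC r) (f j)).
  assert (Hsum : Rsum N (fun j => weight (freq d j) * Cnorm2 (g j)) = 1).
  { rewrite (Rsum_ext _ _ (fun j => r ^ 2 * (weight (freq d j) * Cnorm2 (f j)))).
    rewrite Rsum_scal. exact Hr2. intros. unfold g. rewrite Cnorm2_scal. ring. }
  assert (Hg0 : forall j, (j < N)%nat -> good j = false -> g j = RtoC 0).
  { intros j Hj Hb. unfold g. rewrite Hsup. Cring. intro HH. apply In_filter_seq in HH. destruct HH; congruence. }
  assert (HAg : forall i, (i < N)%nat -> Defs.apply d A g i = RtoC 0).
  { intros i Hi. unfold Defs.apply.
    rewrite (Csum_ext _ _ (fun j => Csum (n - 1) (fun l => Cmult (B i l) (Cmult (D l j) (g j))))).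
    2:{ intros j Hj. rewrite HBD by auto. change (Cmult (Csum (n - 1) (fun l => Cmult (B i l) (D l j))) (g j) = Csum (n - 1) (fun l => Cmult (B i l) (Cmult (D l j) (g j)))).
        rewrite Csum_mulr. apply Csum_ext. intros. Cring. }
    rewrite Csum_swap. apply Csum_zero. intros l Hl.
    rewrite <- Csum_mull. rewrite Csum_Lsum. rewrite (Lsum_filter good).
    2:{ intros j Hj Hb. apply in_seq in Hj. rewrite Hg0 by (auto; lia). Cring. }
    fold S. rewrite (Lsum_ext S _ (fun j => Cmult (RtoC r) (Cmult (D l j) (f j)))) by (intros; unfold g; Cring).
    rewrite Lsum_scal, Hker by auto. Cring. }
  assert (HWg : W_norm d g <= 1). { unfold W_norm. fold N. rewrite Hsum, sqrt_1. lra. }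
  eapply Rle_trans; [|apply Rsup_ge; [apply opset_bounded| exists g; split; [exact HWg| reflexivity]]].
  unfold L2_norm. apply sqrt_le_1_alt. fold N. rewrite <- (Rmult_1_r (/ t)), <- Hsum, <- Rsum_scal.
  apply Rsum_le. intros i Hi. rewrite HAg by auto. rewrite Cnorm2_sub0.
  pose proof (Cnorm2_nonneg (g i)). pose proof (weight_ge1 (freq d i)).
  destruct (good i) eqn:Eg.
  - specialize (Hgood i Hi Eg). 
    assert (weight (freq d i) * / t <= 1). { apply (Rmult_le_reg_r t); auto. rewrite Rmult_assoc, Rinv_l by lra. lra. }
    nra.
  - rewrite Hg0 by auto. unfold Cnorm2; simpl. lra.
Qed.

Definition pred_s (s : nat) (k : list Z) : bool := Z.leb (abs_sum k) (Z.of_nat s).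
Definition Fc (d s : nat) : nat := length (filter (pred_s s) (cube d)).

Lemma abs_sum_cons : forall e k, abs_sum (e :: k) = (Z.abs e + abs_sum k)%Z.
Proof. reflexivity. Qed.

Lemma pred_m1 : forall s k, pred_s (S s) ((-1)%Z :: k) = pred_s s k.
Proof. intros. unfold pred_s. rewrite abs_sum_cons. simpl Z.abs. 
  destruct (Z.leb_spec (1 + abs_sum k) (Z.of_nat (S s))); destruct (Z.leb_spec (abs_sum k) (Z.of_nat s)); auto; lia. Qed.
Lemma pred_p1 : forall s k, pred_s (S s) (1%Z :: k) = pred_s s k.
Proof. intros. unfold pred_s. rewrite abs_sum_cons. simpl Z.abs. 
  destruct (Z.leb_spec (1 + abs_sum k) (Z.of_nat (S s))); destruct (Z.leb_spec (abs_sum k) (Z.of_nat s)); auto; lia. Qed.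
Lemma pred_0 : forall s k, pred_s s (0%Z :: k) = pred_s s k.
Proof. intros. unfold pred_s. rewrite abs_sum_cons. reflexivity. Qed.
Lemma pred_m1_0 : forall k, pred_s 0 ((-1)%Z :: k) = false.
Proof. intros. unfold pred_s. rewrite abs_sum_cons. pose proof (abs_sum_nonneg k). simpl Z.abs.
  destruct (Z.leb_spec (1 + abs_sum k) (Z.of_nat 0)); auto; lia. Qed.
Lemma pred_p1_0 : forall k, pred_s 0 (1%Z :: k) = false.
Proof. intros. unfold pred_s. rewrite abs_sum_cons. pose proof (abs_sum_nonneg k). simpl Z.abs.
  destruct (Z.leb_spec (1 + abs_sum k) (Z.of_nat 0)); auto; lia. Qed.

Definition gext (k : list Z) : list (list Z) := map (fun e => e :: k) [(-1)%Z; 0%Z; 1%Z].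
Lemma cube_S : forall m, cube (S m) = flat_map gext (cube m).
Proof. reflexivity. Qed.

Lemma count_S : forall l s, length (filter (pred_s (S s)) (flat_map gext l)) =
  (length (filter (pred_s (S s)) l) + 2 * length (filter (pred_s s) l))%nat.
Proof. induction l; intros. reflexivity.
  change (flat_map gext (a :: l)) with (gext a ++ flat_map gext l). rewrite filter_app, length_app, IHl. unfold gext. simpl map. 
  simpl filter. rewrite pred_m1, pred_0, pred_p1.
  destruct (pred_s s a); destruct (pred_s (S s) a); simpl; lia. Qed.

Lemma count_0 : forall l, length (filter (pred_s 0) (flat_map gext l)) = length (filter (pred_s 0) l).
Proof. induction l; intros. reflexivity.
  change (flat_map gext (a :: l)) with (gext a ++ flat_map gext l). rewrite filter_app, length_app, IHl. unfold gext. simpl map. 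
  simpl filter. rewrite pred_m1_0, pred_0, pred_p1_0.
  destruct (pred_s 0 a); simpl; lia. Qed.

Lemma Fc_SS : forall m s, Fc (S m) (S s) = (Fc m (S s) + 2 * Fc m s)%nat.
Proof. intros. unfold Fc. rewrite cube_S, count_S. reflexivity. Qed.
Lemma Fc_S0 : forall m, Fc (S m) 0 = Fc m 0.
Proof. intros. unfold Fc. rewrite cube_S, count_0. reflexivity. Qed.
Lemma Fc_0s : forall s, Fc 0 s = 1%nat.
Proof. intros. unfold Fc. simpl cube. simpl filter. unfold pred_s. rewrite (proj2 (Z.leb_le _ _)). reflexivity. unfold abs_sum. simpl. lia. Qed.

Lemma Fc_d0 : forall d, Fc d 0 = 1%nat.
Proof. induction d. apply Fc_0s. rewrite Fc_S0; auto. Qed.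
Lemma Fc_d1 : forall d, Fc d 1 = (2 * d + 1)%nat.
Proof. induction d. apply Fc_0s. rewrite Fc_SS, IHd, Fc_d0. lia. Qed.
Lemma Fc_full : forall d s, (d <= s)%nat -> Fc d s = (3 ^ d)%nat.
Proof. induction d; intros. apply Fc_0s. destruct s. lia. rewrite Fc_SS, !IHd by lia. simpl. lia. Qed.
Lemma Fc_mono_s : forall d s s', (s <= s')%nat -> (Fc d s <= Fc d s')%nat.
Proof. induction d; intros. rewrite !Fc_0s; lia.
  destruct s; destruct s'. lia. rewrite Fc_S0, Fc_d0, Fc_SS. pose proof (IHd 0%nat (S s') ltac:(lia)). rewrite Fc_d0 in H0. lia. lia.
  rewrite !Fc_SS. pose proof (IHd (S s) (S s') ltac:(lia)). pose proof (IHd s s' ltac:(lia)). lia. Qed.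
Lemma Fc_mono_d1 : forall d s, (Fc d s <= Fc (S d) s)%nat.
Proof. intros. destruct s. rewrite Fc_S0; lia. rewrite Fc_SS. lia. Qed.
Lemma Fc_mono_d : forall d k s, (Fc d s <= Fc (k + d) s)%nat.
Proof. induction k; intros. simpl; lia. simpl. pose proof (Fc_mono_d1 (k + d) s). pose proof (IHk s). lia. Qed.

Lemma Fc_prod : forall a b s1 s2, (Fc a s1 * Fc b s2 <= Fc (a + b) (s1 + s2))%nat.
Proof. induction a; intros.
- rewrite Fc_0s. replace (0 + b)%nat with b by lia. pose proof (Fc_mono_s b s2 (s1+s2) ltac:(lia)). lia.
- destruct s1.
  + rewrite Fc_d0. pose proof (Fc_mono_d b (S a) s2). replace (0 + s2)%nat with s2 by lia. lia.
  + replace (S a + b)%nat with (S (a + b)) by lia. replace (S s1 + s2)%nat with (S (s1 + s2)) by lia.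
    rewrite !Fc_SS. pose proof (IHa b (S s1) s2). pose proof (IHa b s1 s2).
    replace (S s1 + s2)%nat with (S (s1 + s2)) in H by lia. nia.
Qed.

Lemma Fc_block : forall s q, ((2 * q + 1) ^ s <= Fc (s * q) s)%nat.
Proof. induction s; intros. simpl. rewrite Fc_0s. lia.
  rewrite Nat.pow_succ_r'. replace (S s * q)%nat with (q + s * q)%nat by lia. replace (S s) with (1 + s)%nat by lia.
  pose proof (Fc_prod q (s * q) 1 s). rewrite Fc_d1 in H. pose proof (IHs q). nia. Qed.

Lemma count_idx_gen : forall (P : list Z -> bool) L a,
  length (filter (fun j => P (nth j (a ++ L) [])) (seq (length a) (length L))) = length (filter P L).
Proof. induction L; intros. reflexivity.
  simpl length. simpl seq. simpl filter. rewrite nth_middle.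
  specialize (IHL (a0 ++ [a])). rewrite <- app_assoc in IHL. simpl in IHL. rewrite length_app in IHL. simpl in IHL.
  replace (length a0 + 1)%nat with (S (length a0)) in IHL by lia. destruct (P a); simpl; rewrite IHL; reflexivity. Qed.

Lemma length_cube : forall d, length (cube d) = (3 ^ d)%nat.
Proof. induction d. reflexivity. rewrite cube_S.
  assert (forall l, length (flat_map gext l) = (3 * length l)%nat).
  { induction l. reflexivity. change (flat_map gext (a :: l)) with (gext a ++ flat_map gext l). rewrite length_app, IHl. simpl. lia. }
  rewrite H, IHd. simpl. lia. Qed.

Lemma count_good : forall d s, length (filter (fun j => pred_s s (freq d j)) (seq 0 (dimW d))) = Fc d s.
Proof. intros. unfold dimW, freq, Fc. rewrite <- length_cube. apply (count_idx_gen (pred_s s) (cube d) []). Qed.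

Lemma weight_good : forall s k, pred_s s k = true -> weight k <= INR s + 1.
Proof. intros. unfold pred_s in H. apply Z.leb_le in H. rewrite weight_abs. apply IZR_le in H. rewrite <- INR_IZR_INZ in H. lra. Qed.
Lemma weight_bad : forall s k, pred_s s k = false -> INR s + 2 <= weight k.
Proof. intros. unfold pred_s in H. apply Z.leb_gt in H. rewrite weight_abs.
  assert (Z.of_nat s + 1 <= abs_sum k)%Z by lia. apply IZR_le in H0. rewrite plus_IZR, <- INR_IZR_INZ in H0. lra. Qed.

Lemma ln_le_sub1 : forall y, 0 < y -> ln y <= y - 1.
Proof. intros. pose proof (exp_ineq1_le (ln y)). rewrite exp_ln in H0 by auto. lra. Qed.
Lemma ln_ge_1m : forall y, 0 < y -> 1 - / y <= ln y.
Proof. intros. pose proof (ln_le_sub1 (/ y) (Rinv_0_lt_compat _ H)). rewrite ln_Rinv in H0 by auto. lra. Qed.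
Lemma ln_mono : forall x y, 0 < x -> x <= y -> ln x <= ln y.
Proof. intros. destruct H0. left; apply ln_increasing; auto. subst; lra. Qed.
Lemma ln_1p_le : forall y, 0 <= y -> ln (1 + y) <= y.
Proof. intros. pose proof (ln_le_sub1 (1 + y)). lra. Qed.

Lemma Fc_pos : forall d s, (1 <= Fc d s)%nat.
Proof. intros. pose proof (Fc_mono_s d 0 s ltac:(lia)). rewrite Fc_d0 in H. lia. Qed.

Lemma pow_le1 : forall x n, 0 <= x <= 1 -> x ^ n <= 1.
Proof. induction n; intros; simpl. lra. pose proof (IHn H). assert (0 <= x ^ n) by (apply pow_le; lra). nra. Qed.

Lemma Fc_gen : forall d s x, 0 <= x <= 1 -> INR (Fc d s) * x ^ s <= (1 + 2 * x) ^ d.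
Proof. induction d; intros s x Hx.
  - rewrite Fc_0s. simpl pow at 2. rewrite Rmult_1_l. apply pow_le1; auto.
  - destruct s as [|s].
    + rewrite Fc_d0. simpl pow at 1. pose proof (pow_R1_Rle (1 + 2 * x) (S d) ltac:(lra)). simpl INR. lra.
    + rewrite Fc_SS, plus_INR, mult_INR. pose proof (IHd (S s) x Hx). pose proof (IHd s x Hx).
      simpl pow. simpl pow in H. simpl INR.
      assert (2 * x * (INR (Fc d s) * x ^ s) <= 2 * x * (1 + 2 * x) ^ d) by (apply Rmult_le_compat_l; lra).
      replace ((INR (Fc d (S s)) + (1 + 1) * INR (Fc d s)) * (x * x ^ s)) with
        (INR (Fc d (S s)) * (x * x ^ s) + 2 * x * (INR (Fc d s) * x ^ s)) by ring. lra.
Qed.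

Lemma Fc_low : forall d s, (1 <= s)%nat -> (s <= d)%nat -> (1 + INR d / INR s) ^ s <= INR (Fc d s).
Proof. intros d s Hs Hsd.
  set (q := (d / s)%nat).
  assert (Hdm : d = (s * q + d mod s)%nat) by (apply Nat.div_mod; lia).
  assert (Hmod : (d mod s < s)%nat) by (apply Nat.mod_upper_bound; lia).
  assert (Hq : (1 <= q)%nat). { unfold q. apply Nat.div_str_pos. lia. }
  assert (H1 : (Fc (s * q) s <= Fc d s)%nat).
  { pose proof (Fc_mono_d (s * q) (d - s * q) s). replace (d - s * q + s * q)%nat with d in H by lia. auto. }
  pose proof (Fc_block s q).
  assert (H2 : ((2 * q + 1) ^ s <= Fc d s)%nat) by lia.
  apply le_INR in H2. rewrite pow_INR in H2.
  eapply Rle_trans; [|exact H2]. apply pow_incr. split.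
  - pose proof (pos_INR d). pose proof (lt_0_INR s ltac:(lia)). 
    assert (0 <= INR d / INR s) by (unfold Rdiv; apply Rmult_le_pos; [lra | left; apply Rinv_0_lt_compat; lra]). lra.
  - assert (Hn : (d + s <= s * (2 * q + 1))%nat) by nia. apply le_INR in Hn.
    rewrite plus_INR, mult_INR in Hn. pose proof (lt_0_INR s ltac:(lia)).
    apply (Rmult_le_reg_l (INR s)); auto. field_simplify; lra.
Qed.

Lemma filter_false_len : forall (l : list nat), length (filter (fun _ => false) l) = 0%nat.
Proof. induction l; simpl; auto. Qed.
Lemma filter_true_len : forall (l : list nat), length (filter (fun _ => true) l) = length l.
Proof. induction l; simpl; auto. Qed.

Lemma an_up_s : forall d n s, (1 <= n)%nat -> (Fc d s < n)%nat -> approx_number d n <= sqrt (/ (INR s + 2)).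
Proof. intros. pose proof (pos_INR s).
  apply (upper_gen d n (fun j => pred_s s (freq d j))); auto.
  rewrite count_good. lia. left; apply Rinv_0_lt_compat; lra.
  intros j Hj Hb. pose proof (weight_bad s (freq d j) Hb).
  apply (Rmult_le_reg_l (INR s + 2)). lra. rewrite <- Rmult_assoc, Rinv_r by lra. lra. Qed.

Lemma an_le1 : forall d n, (1 <= n)%nat -> approx_number d n <= 1.
Proof. intros. rewrite <- sqrt_1. apply (upper_gen d n (fun _ => false)); auto.
  rewrite filter_false_len. lia. lra. intros. pose proof (weight_ge1 (freq d j)). lra. Qed.

Lemma an_low_s : forall d n s, (1 <= n)%nat -> (n <= Fc d s)%nat -> sqrt (/ (INR s + 1)) <= approx_number d n.
Proof. intros. pose proof (pos_INR s).
  apply (lower_gen d n (fun j => pred_s s (freq d j))); auto.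
  rewrite count_good. lia. lra.
  intros j Hj Hg. pose proof (weight_good s (freq d j) Hg). lra. Qed.

Lemma an_zero : forall d n, (dimW d < n)%nat -> approx_number d n = 0.
Proof. intros. apply Rle_antisym.
  - rewrite <- sqrt_0. apply (upper_gen d n (fun _ => true)); auto. lia.
    rewrite filter_true_len, length_seq. lia. lra. intros; discriminate.
  - apply (Rinf_ge (aset d n)). apply aset_nonempty; lia. intros y [A [_ ->]]. apply opnorm_nonneg. Qed.

Lemma ksqrt : forall k p, 0 <= k -> 0 <= p -> k * sqrt p = sqrt (k * k * p).
Proof. intros. rewrite sqrt_mult_alt. rewrite sqrt_square; auto. apply Rmult_le_pos; auto. Qed.

Lemma ln2_bounds : / 2 < ln 2 /\ ln 2 <= 1.
Proof. split. apply ln_lt_2. pose proof (ln_le_sub1 2). lra. Qed.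

Lemma nat_ceil : forall v, 0 < v -> exists s : nat, v <= INR s /\ INR s <= v + 1.
Proof. intros. destruct (archimed v) as [H1 H2].
  assert (0 < up v)%Z. { apply lt_IZR. lra. }
  exists (Z.to_nat (up v)). rewrite INR_IZR_INZ, Z2Nat.id by lia. lra. Qed.
Lemma nat_floor : forall v, 0 < v -> exists s : nat, INR s <= v /\ v < INR s + 1.
Proof. intros. destruct (archimed v) as [H1 H2].
  assert (0 < up v)%Z. { apply lt_IZR. lra. }
  exists (Z.to_nat (up v - 1)). rewrite INR_IZR_INZ, Z2Nat.id by lia. rewrite minus_IZR. lra. Qed.

Lemma ln_lt_nat : forall a b : nat, (1 <= a)%nat -> (1 <= b)%nat -> ln (INR a) < ln (INR b) -> (a < b)%nat.
Proof. intros. destruct (le_lt_dec b a); auto. exfalso.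
  assert (INR b <= INR a) by (apply le_INR; lia). assert (0 < INR b) by (apply lt_0_INR; lia).
  pose proof (ln_mono _ _ H3 H2). lra. Qed.

Lemma main_big : forall d n, (1 <= d)%nat -> (d < n)%nat -> (n <= 3 ^ d)%nat ->
  (1/4) * sqrt (/ (ln (INR n) / ln (1 + INR d / log2 (INR n)))) <= approx_number d n /\
  approx_number d n <= 8 * sqrt (/ (ln (INR n) / ln (1 + INR d / log2 (INR n)))).
Proof.
  intros d n Hd Hdn HnN.
  set (lam := ln (INR n)). set (u := INR d / log2 (INR n)). set (w := ln (1 + u)). set (v := lam / w).
  assert (Hd1 : 1 <= INR d) by (apply (le_INR 1); lia).
  assert (Hn2 : INR d + 1 <= INR n) by (rewrite <- S_INR; apply le_INR; lia).
  destruct ln2_bounds as [l2a l2b].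
  assert (Hlam1 : ln 2 <= lam) by (apply ln_mono; lra).
  assert (Hlam2 : lam <= INR d * (2 * ln 2)).
  { assert (INR n <= 4 ^ d).
    { assert (n <= 4 ^ d)%nat. { eapply Nat.le_trans; [exact HnN|]. apply Nat.pow_le_mono_l. lia. }
      apply le_INR in H. rewrite pow_INR in H. replace (INR 4) with 4 in H by (simpl; lra). exact H. }
    unfold lam. eapply Rle_trans. apply ln_mono; [lra| exact H]. rewrite ln_pow by lra.
    replace 4 with (2 * 2) by lra. rewrite ln_mult by lra. lra. }
  assert (Hlam0 : 0 < lam) by lra.
  assert (Hul : u * lam = INR d * ln 2). { unfold u, log2. fold lam. field. split; apply Rgt_not_eq; lra. }
  assert (Hu_half : 1/2 <= u) by nra.
  assert (Hu_d : u <= INR d) by nra.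
  assert (Hw3 : 1/3 <= w).
  { unfold w. pose proof (ln_ge_1m (1 + u) ltac:(lra)).
    assert (/ (1 + u) <= 2/3). { apply (Rmult_le_reg_l (1 + u)); [lra|]. rewrite Rinv_r by lra. lra. } lra. }
  assert (Hw_lam : w <= lam) by (apply ln_mono; lra).
  assert (Hv : v * w = lam) by (unfold v; field; lra).
  assert (Hv1 : 1 <= v) by nra.
  split.
  -
    assert (Hs : exists s, (n <= Fc d s)%nat /\ INR s + 1 <= 16 * v).
    { destruct (Rle_or_lt u 3) as [Hu3|Hu3].
      - exists d. split. rewrite Fc_full; lia.
        assert (w <= 2 * ln 2). { unfold w. replace (2 * ln 2) with (ln (2 * 2)) by (rewrite ln_mult; lra). apply ln_mono; lra. }
        assert (INR d * ln 2 <= 6 * v * ln 2) by nra.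
        assert (INR d <= 6 * v) by nra. lra.
      - destruct (Rle_or_lt (INR d) v) as [Hdv|Hdv].
        + exists d. split. rewrite Fc_full; lia. lra.
        + destruct (nat_ceil v) as [s [Hs1 Hs2]]. lra.
          assert (Hs0 : (1 <= s)%nat). { destruct s. simpl in Hs1. lra. lia. }
          assert (Hsd : (s <= d)%nat). { assert (INR s < INR (S d)) by (rewrite S_INR; lra). apply INR_lt in H. lia. }
          exists s. split; [|lra].
          destruct (le_lt_dec n (Fc d s)) as [Hok|Hbad]; auto. exfalso.
          pose proof (Fc_pos d s) as HF1.
          assert (HFpos : 0 < INR (Fc d s)) by (apply lt_0_INR; lia).
          assert (Hlt : ln (INR (Fc d s)) < lam) by (apply ln_increasing; auto; apply lt_INR; auto).
          pose proof (Fc_low d s Hs0 Hsd) as HFl.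
          assert (Hspos : 0 < INR s) by (apply lt_0_INR; lia).
          assert (Hbase : 0 < 1 + INR d / INR s).
          { assert (0 <= INR d / INR s) by (unfold Rdiv; apply Rmult_le_pos; [lra | left; apply Rinv_0_lt_compat; lra]). lra. }
          assert (Hln : INR s * ln (1 + INR d / INR s) <= ln (INR (Fc d s))).
          { rewrite <- ln_pow by auto. apply ln_mono; auto. apply pow_lt; auto. }
          assert (Hw4 : 2 * ln 2 <= w). { unfold w. replace (2 * ln 2) with (ln (2 * 2)) by (rewrite ln_mult; lra). apply ln_mono; lra. }
          assert (Hdus : u * INR s <= INR d).
          { assert (INR d * ln 2 = u * v * w) by (rewrite <- Hul, <- Hv; ring).
            assert (2 * u * v * ln 2 <= INR d * ln 2) by nra.
            assert (2 * u * v <= INR d) by nra. nra. }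
          assert (Hds : u <= INR d / INR s). { apply (Rmult_le_reg_r (INR s)); auto. field_simplify; lra. }
          assert (Hw2 : w <= ln (1 + INR d / INR s)) by (apply ln_mono; lra).
          nra. }
    destruct Hs as [s [Hs1 Hs2]].
    assert (Hvpos : 0 < v) by lra.
    rewrite ksqrt by (try lra; left; apply Rinv_0_lt_compat; lra).
    eapply Rle_trans; [|apply (an_low_s d n s); auto; lia].
    apply sqrt_le_1_alt. replace (1 / 4 * (1 / 4) * / v) with (/ (16 * v)) by (field; lra).
    pose proof (pos_INR s). apply Rinv_le_contravar; lra.
  -
    assert (Hs : exists s, (Fc d s < n)%nat /\ v <= 64 * (INR s + 2)).
    { destruct (nat_floor (v / 64)) as [s [Hs1 Hs2]]. lra.
      exists s. split; [|lra].
      destruct s as [|s'].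
      - rewrite Fc_d0. lia.
      - set (s := S s') in *. set (sg := v / 64) in *.
        assert (Hs1' : 1 <= INR s) by (apply (le_INR 1); unfold s; lia).
        assert (Hvd : v * (w * u) = INR d * ln 2) by (rewrite <- Hul, <- Hv; ring).
        assert (Hwu : 1/6 <= w * u) by nra.
        assert (Hsgd : sg <= INR d) by (unfold sg; nra).
        set (x := sg / INR d).
        assert (Hx0 : 0 < x). { unfold x. apply Rdiv_lt_0_compat; lra. }
        assert (Hx1 : x <= 1). { unfold x. apply (Rmult_le_reg_r (INR d)); [lra|]. field_simplify; lra. }
        pose proof (Fc_gen d s x ltac:(lra)) as HG.
        pose proof (Fc_pos d s) as HF1.
        assert (HFpos : 0 < INR (Fc d s)) by (apply lt_0_INR; lia).
        assert (Hxs : 0 < x ^ s) by (apply pow_lt; auto).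
        apply ln_mono in HG; [|apply Rmult_lt_0_compat; auto].
        rewrite ln_mult, !ln_pow in HG by lra.
        pose proof (ln_1p_le (2 * x) ltac:(lra)).
        assert (Hdx : INR d * x = sg) by (unfold x; field; lra).
        assert (Hlnx : ln x <= 0) by (rewrite <- ln_1; apply ln_mono; lra).
        assert (Hinvx : / x * ln 2 = 64 * u * w).
        { unfold x, sg. replace (/ (v / 64 / INR d) * ln 2) with (64 * (INR d * ln 2) / v) by (field; lra).
          rewrite <- Hvd. field. lra. }
        assert (Hww : w <= 1 + u) by (unfold w; pose proof (ln_1p_le u); lra).
        assert (Hinvx2 : / x <= 128 * (1 + u) ^ 2).
        { assert (/ x * ln 2 <= 64 * (1 + u) ^ 2) by (rewrite Hinvx; nra).
          assert (/ x * ln 2 * 2 <= 128 * (1 + u) ^ 2) by lra.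
          assert (0 < / x) by (apply Rinv_0_lt_compat; lra). nra. }
        assert (Hmlnx : - ln x <= 7 + 2 * w).
        { rewrite <- ln_Rinv by lra. eapply Rle_trans. apply ln_mono; [apply Rinv_0_lt_compat; lra| exact Hinvx2].
          replace 128 with (2 ^ 7) by (simpl; lra). rewrite ln_mult, !ln_pow by (try apply pow_lt; lra).
          fold w. simpl INR. lra. }
        assert (Hsl : sg * ln x <= INR s * ln x) by nra.
        assert (ln (INR (Fc d s)) < lam).
        { assert (ln (INR (Fc d s)) <= 2 * sg + sg * (7 + 2 * w)) by nra.
          assert (sg * (9 + 2 * w) < 64 * sg * w) by nra.
          assert (64 * sg * w = lam) by (unfold sg; rewrite <- Hv; field). nra. }
        apply ln_lt_nat; auto. lia. }
    destruct Hs as [s [Hs1 Hs2]].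
    assert (Hvpos : 0 < v) by lra.
    eapply Rle_trans; [apply (an_up_s d n s); auto; lia|].
    rewrite ksqrt by (try lra; left; apply Rinv_0_lt_compat; lra).
    apply sqrt_le_1_alt. replace (8 * 8 * / v) with (/ (v / 64)) by (field; lra).
    pose proof (pos_INR s). apply Rinv_le_contravar; lra.
Qed.

Theorem theorem2p3 :
  exists c C : R, 0 < c /\ c <= C /\
    (forall d n : nat, (1 <= d)%nat -> (1 <= n)%nat -> (n <= 3 ^ d)%nat ->
       c * psi d n <= approx_number d n /\ approx_number d n <= C * psi d n) /\
    (forall d n : nat, (1 <= d)%nat -> (3 ^ d < n)%nat -> approx_number d n = 0).
Proof.
  exists (1/4), 8. split; [lra|split; [lra|split]].
  - intros d n Hd Hn HnN. unfold psi. destruct (n <=? d)%nat eqn:End.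
    + apply Nat.leb_le in End. split.
      * eapply Rle_trans; [|apply (an_low_s d n 1%nat); auto].
        2:{ rewrite Fc_d1. lia. }
        replace (INR 1 + 1) with 2 by (simpl; lra).
        rewrite <- (sqrt_square (1/4 * 1)) by lra. apply sqrt_le_1_alt. lra.
      * pose proof (an_le1 d n Hn). lra.
    + apply Nat.leb_gt in End.
      destruct ln2_bounds as [l2a l2b].
      assert (Hn2 : 2 <= INR n). { replace 2 with (INR 2) by (simpl; lra). apply le_INR; lia. }
      assert (Hlam : ln 2 <= ln (INR n)) by (apply ln_mono; lra).
      assert (HL : 0 < log2 (INR n)). { unfold log2. apply Rdiv_lt_0_compat; lra. }
      assert (Hd1 : 1 <= INR d) by (apply (le_INR 1); lia).
      set (u := INR d / log2 (INR n)).
      assert (Hu : 0 < u) by (unfold u; apply Rdiv_lt_0_compat; lra).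
      assert (Hw : 0 < ln (1 + u)). { rewrite <- ln_1. apply ln_increasing; lra. }
      assert (E : log2 (1 + u) / log2 (INR n) = / (ln (INR n) / ln (1 + u))).
      { unfold log2. field. repeat split; apply Rgt_not_eq; lra. }
      rewrite E. apply main_big; auto.
  - intros d n Hd Hn. apply an_zero. unfold dimW. exact Hn.
Qed.
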